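(* $\mathrm{UF}_1^=$ and $\mathrm{FOC}^2$ are incomparable in expressivity: neither $\mathrm{UF}_1^=\leq\mathrm{FOC}^2$ nor $\mathrm{FOC}^2\leq\mathrm{UF}_1^=$ holds.
   Context: Vocabularies are relational (relation symbols of positive finite arities, no constants or function symbols). A $k$-ary $\tau$-atom is an atomic formula (a relational atom $R(z_1,\dots,z_m)$ with $R\in\tau$, or an equality $z=z'$) having exactly $k$ distinct free variables. For a finite set $V$ of variables, a $V$-uniform set is a finite set of relational (non-equality) $\tau$-atoms $R(z_1,\dots,z_m)$ with $\{z_1,\dots,z_m\}=V$. The set $\mathrm{UF}_1^=(\tau)$ is the smallest set $\mathcal F$ such that: (1) every unary $\tau$-atom, and $\bot,\top$, are in $\mathcal F$; (2) every equality $x=y$ is in $\mathcal F$; (3) $\mathcal F$ is closed under $\neg$ and $\wedge$; (4) if $X=\{x_0,\dots,x_k\}$ is a finite set of variables, $U$ a finite set of formulas of $\mathcal F$ with free variables in $X$, $V\subseteq X$, $F$ a $V$-uniform set of $\tau$-atoms, and $\varphi$ a Boolean combination of formulas in $U\cup F$, then $\exists x_1\dots\exists x_k\,\varphi\in\mathcal F$ and $\exists x_0\dots\exists x_k\,\varphi\in\mathcal F$. $\mathrm{UF}_1^=$ is the union of $\mathrm{UF}_1^=(\tau)$ over all vocabularies; $\forall$ and other connectives are abbreviations. $\mathrm{FOC}^2$ is the two-variable fragment of first-order logic with equality extended by counting quantifiers $\exists^{\geq k}$ ($k$ a positive integer): formulas built using only two variable symbols. For fragments $\mathcal L,\mathcal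 L'$ of first-order logic, $\mathcal L\leq\mathcal L'$ means that every sentence of $\mathcal L$ is equivalent to some sentence of $\mathcal L'$. *)

(* Defs.v *)
From Stdlib Require Import List Arith PeanoNat.
Import ListNotations.

Set Implicit Arguments.

Record vocab := Vocab {
  sym : Type;
  arity : sym -> nat;
  arity_pos : forall R, 0 < arity R
}.

Definition var := nat.

Inductive form (t : vocab) : Type :=
| FBot : form t
| FTop : form t
| FAtom : sym t -> list var -> form t
| FEq : var -> var -> form t
| FNeg : form t -> form t
| FAnd : form t -> form t -> form t
| FEx : var -> form t -> form t
| FExGe : nat -> var -> form t -> form t.

Arguments FBot {t}.
Arguments FTop {t}.
Arguments FAtom {t}.
Arguments FEq {t}.
Arguments FNeg {t}.
Arguments FAnd {t}.
Arguments FEx {t}.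
Arguments FExGe {t}.

Fixpoint fv {t} (f : form t) : list var :=
  match f with
  | FBot | FTop => []
  | FAtom _ zs => zs
  | FEq x y => [x; y]
  | FNeg g => fv g
  | FAnd g h => fv g ++ fv h
  | FEx x g => remove Nat.eq_dec x (fv g)
  | FExGe _ x g => remove Nat.eq_dec x (fv g)
  end.

Fixpoint vars {t} (f : form t) : list var :=
  match f with
  | FBot | FTop => []
  | FAtom _ zs => zs
  | FEq x y => [x; y]
  | FNeg g => vars g
  | FAnd g h => vars g ++ vars h
  | FEx x g => x :: vars g
  | FExGe _ x g => x :: vars g
  end.

Fixpoint wf {t} (f : form t) : Prop :=
  match f with
  | FBot | FTop | FEq _ _ => True
  | FAtom R zs => length zs = arity t R
  | FNeg g => wf g
  | FAnd g h => wf g /\ wf h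
  | FEx _ g => wf g
  | FExGe _ _ g => wf g
  end.

Fixpoint cnt_pos {t} (f : form t) : Prop :=
  match f with
  | FBot | FTop | FEq _ _ | FAtom _ _ => True
  | FNeg g => cnt_pos g
  | FAnd g h => cnt_pos g /\ cnt_pos h
  | FEx _ g => cnt_pos g
  | FExGe k _ g => 0 < k /\ cnt_pos g
  end.

Definition sentence {t} (f : form t) : Prop := fv f = [].

(** Structures. Relations are interpreted on argument lists (only lists of
    length [arity R] are ever queried by well-formed formulas). *)
Record structure (t : vocab) := Structure {
  dom : Type;
  rel : sym t -> list dom -> Prop
}.

Definition upd {D : Type} (s : var -> D) (x : var) (d : D) : var -> D :=
  fun y => if Nat.eqb y x then d else s y.

Fixpoint sat {t} (M : structure t) (s : var -> dom M) (f : form t) : Prop :=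
  match f with
  | FBot => False
  | FTop => True
  | FAtom R zs => rel M R (map s zs)
  | FEq x y => s x = s y
  | FNeg g => ~ sat M s g
  | FAnd g h => sat M s g /\ sat M s h
  | FEx x g => exists d : dom M, sat M (upd s x d) g
  | FExGe k x g =>
      exists l : list (dom M),
        NoDup l /\ length l = k /\ forall d, In d l -> sat M (upd s x d) g
  end.

(** Logical equivalence (over all structures; assignments are quantified,
    so structures with empty domain play no role). *)
Definition equivalent {t} (f g : form t) : Prop :=
  forall (M : structure t) (s : var -> dom M), sat M s f <-> sat M s g.

Definition fragment := forall t : vocab, form t -> Prop.

Definition frag_le (L L' : fragment) : Prop :=
  forall (t : vocab) (f : form t), L t f -> sentence f ->
    exists g : form t, L' t g /\ sentence g /\ equivalent f g.

Definition FOC2 : fragment := fun t f =>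
  wf f /\ cnt_pos f /\
  exists x y : var, forall z, In z (vars f) -> z = x \/ z = y.

Fixpoint exs {t} (xs : list var) (f : form t) : form t :=
  match xs with
  | [] => f
  | x :: xs' => FEx x (exs xs' f)
  end.

Inductive boolcomb {t} (S : list (form t)) : form t -> Prop :=
| bc_leaf : forall f, In f S -> boolcomb S f
| bc_neg : forall f, boolcomb S f -> boolcomb S (FNeg f)
| bc_and : forall f g, boolcomb S f -> boolcomb S g -> boolcomb S (FAnd f g).

Definition unary_rel_atom {t} (f : form t) : Prop :=
  exists R zs z, f = FAtom R zs /\ length zs = arity t R /\
                 (forall w, In w zs <-> w = z).

Definition uniform_atom {t} (V : list var) (f : form t) : Prop :=
  exists R zs, f = FAtom R zs /\ length zs = arity t R /\
               (forall w, In w zs <-> In w V).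

Unset Implicit Arguments.
Inductive UF1 (t : vocab) : form t -> Prop :=
| UF1_unary : forall f, unary_rel_atom f -> UF1 t f
| UF1_bot : UF1 t FBot
| UF1_top : UF1 t FTop
| UF1_eq : forall x y, UF1 t (FEq x y)
| UF1_neg : forall f, UF1 t f -> UF1 t (FNeg f)
| UF1_and : forall f g, UF1 t f -> UF1 t g -> UF1 t (FAnd f g)
| UF1_ex : forall (x0 : var) (xs : list var) (U F : list (form t))
                  (V : list var) (phi : form t),
    NoDup (x0 :: xs) ->
    (forall u, In u U -> UF1 t u) ->
    (forall u, In u U -> incl (fv u) (x0 :: xs)) ->
    incl V (x0 :: xs) ->
    (forall a, In a F -> uniform_atom V a) ->
    boolcomb (U ++ F) phi ->
    UF1 t (exs xs phi)
| UF1_ex0 : forall (x0 : var) (xs : list var) (U F : list (form t))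
                   (V : list var) (phi : form t),
    NoDup (x0 :: xs) ->
    (forall u, In u U -> UF1 t u) ->
    (forall u, In u U -> incl (fv u) (x0 :: xs)) ->
    incl V (x0 :: xs) ->
    (forall a, In a F -> uniform_atom V a) ->
    boolcomb (U ++ F) phi ->
    UF1 t (FEx x0 (exs xs phi)).

Definition UF1_frag : fragment := UF1.
Set Implicit Arguments.

(* Main.v *)
Require Import Defs.
From Stdlib Require Import List Arith Lia Classical FunctionalExtensionality.
Import ListNotations.

Definition voc3 : vocab := {| sym := unit; arity := fun _ => 3; arity_pos := fun _ => Nat.lt_0_succ 2 |}.

Definition M3 (b : bool) : structure voc3 :=
  {| dom := nat; rel := fun _ l => b = true /\ exists x y z, In x l /\ In y l /\ In z l /\ x <> y /\ y <> z /\ x <> z |}.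

Lemma two_var_inv (x y : var) : forall f : form voc3,
  (forall z, In z (vars f) -> z = x \/ z = y) ->
  forall sg : var -> nat, sat (M3 true) sg f <-> sat (M3 false) sg f.
Proof.
  induction f as [| |R zs| | |f1 IHf1 f2 IHf2|v f IHf|k v f IHf]; intros Hv sg; simpl in *.
  - tauto.
  - tauto.
  - split; [|intros [H _]; discriminate].
    intros [_ (a & b & c & Ha & Hb & Hc & Hab & Hbc & Hac)].
    apply in_map_iff in Ha as (a' & <- & Ha').
    apply in_map_iff in Hb as (b' & <- & Hb').
    apply in_map_iff in Hc as (c' & <- & Hc').
    destruct (Hv _ Ha'), (Hv _ Hb'), (Hv _ Hc'); subst; congruence.
  - tauto.
  - rewrite IHf; tauto.
  - rewrite IHf1, IHf2; [tauto| |]; intros z Hz; apply Hv; apply in_or_app; tauto.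
  - split; intros [d Hd]; exists d; [rewrite <- IHf | rewrite IHf]; auto.
  - split; intros (l & H1 & H2 & H3); exists l; repeat split; auto; intros d Hd;
      [rewrite <- IHf | rewrite IHf]; auto.
Qed.

Definition tri : form voc3 := FEx 0 (exs [1;2] (FAtom (tt : sym voc3) [0;1;2])).

Lemma tri_UF1 : UF1 voc3 tri.
Proof.
  unfold tri. apply (UF1_ex0 voc3 0 [1;2] [] [FAtom (tt : sym voc3) [0;1;2]] [0;1;2]).
  - repeat constructor; simpl; intuition lia.
  - simpl; tauto.
  - simpl; tauto.
  - intros z Hz; exact Hz.
  - intros a [<-|[]]. exists (tt : sym voc3), [0;1;2]. split; [reflexivity|split;[reflexivity|tauto]].
  - apply bc_leaf. simpl; auto.
Qed.

Lemma part1 : ~ frag_le UF1_frag FOC2.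
Proof.
  intro H. destruct (H voc3 tri tri_UF1 eq_refl) as (g & (Hwf & Hc & x & y & Hv) & Hs & Heq).
  pose (s := fun _ : var => 0).
  assert (A : sat (M3 true) s tri).
  { exists 0, 1, 2. simpl. split; [reflexivity|]. exists 0, 1, 2. intuition lia. }
  assert (B : ~ sat (M3 false) s tri).
  { intros (a & b & c & [D _]). discriminate. }
  apply B. apply (Heq (M3 false) s). apply (two_var_inv x y g Hv).
  apply (Heq (M3 true) s). exact A.
Qed.

Ltac dm1 a c := pose proof (Nat.div_mod_eq a c); pose proof (Nat.mod_upper_bound a c ltac:(lia));
  let q := fresh "q" in let r := fresh "r" in set (q := a / c) in *; set (r := a mod c) in *; clearbody q r.
Ltac dm := repeat match goal with
  | H : context [?a / ?c] |- _ => dm1 a c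
  | |- context [?a / ?c] => dm1 a c
  | H : context [?a mod ?c] |- _ => dm1 a c
  | |- context [?a mod ?c] => dm1 a c end; lia.

Definition voc2 : vocab := {| sym := unit; arity := fun _ => 2; arity_pos := fun _ => Nat.lt_0_succ 1 |}.

Definition E (c m n : nat) : Prop := m <> n /\ m / c = n / c.

Definition MS (c : nat) : structure voc2 :=
  {| dom := nat; rel := fun _ l => match l with [m; n] => E c m n | _ => False end |}.

Definition goodc c := c = 2 \/ c = 3.

Lemma E_sym c m n : E c m n -> E c n m.
Proof. unfold E; intros [H1 H2]; split; congruence. Qed.

Lemma E_irr c m : ~ E c m m.
Proof. unfold E; tauto. Qed.

Definition nb c b := if b mod c =? 0 then b + 1 else b - 1.

Lemma nb_E c b : goodc c -> E c b (nb c b).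
Proof.
  intros [-> | ->]; unfold E, nb; [destruct (Nat.eqb_spec (b mod 2) 0) | destruct (Nat.eqb_spec (b mod 3) 0)]; split; dm.
Qed.

Lemma nb_le c b : nb c b <= b + 1.
Proof. unfold nb; destruct (_ =? _); lia. Qed.

Lemma nb_ge c b : b - 1 <= nb c b.
Proof. unfold nb; destruct (_ =? _); lia. Qed.

Lemma mkg_inj (a0 ap aq b0 bp bq N : nat) :
  (ap <> a0 -> bp <> b0) -> (aq <> a0 -> aq <> ap -> bq <> b0 /\ bq <> bp) ->
  b0 < N -> bp < N -> bq < N ->
  let g := fun n => if n =? a0 then b0 else if n =? ap then bp else if n =? aq then bq else N + n in
  (forall n m, g n = g m -> n = m).
Proof.
  intros H1 H2 H3 H4 H5 g n m; unfold g.
  destruct (Nat.eqb_spec n a0), (Nat.eqb_spec n ap), (Nat.eqb_spec n aq),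
    (Nat.eqb_spec m a0), (Nat.eqb_spec m ap), (Nat.eqb_spec m aq); subst;
    intros; try lia; try (exfalso; firstorder congruence).
Qed.

Ltac sc := apply mkg_inj; try lia; intros; try split; lia.

Definition ext c1 c2 := forall a0 b0 ap aq : nat, exists g : nat -> nat,
  (forall n m, g n = g m -> n = m) /\ g a0 = b0 /\ (E c1 ap aq <-> E c2 (g ap) (g aq)).

Lemma ext_ok c1 c2 : goodc c1 -> goodc c2 -> ext c1 c2.
Proof.
  intros G1 G2 a0 b0 ap aq.
  set (F := 6 * (b0 + 1)).
  assert (HF : forall c, goodc c -> ~ E c b0 F /\ ~ E c F (F + 3) /\ ~ E c b0 (nb c F)).
  { intros c Gc. assert (nb c F = F + 1) as ->.
    { unfold nb. destruct Gc as [-> | ->]; unfold F;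
      replace (6 * (b0 + 1) mod _) with 0 by (symmetry; dm); reflexivity. }
    destruct Gc as [-> | ->]; unfold F, E; repeat split; intros [Ha Hb]; dm. }
  assert (Hn0 := nb_E c2 b0 G2). assert (HnF := nb_E c2 F G2).
  assert (Hl0 := nb_le c2 b0). assert (HlF := nb_le c2 F).
  destruct (HF c2 G2) as (HF1 & HF2 & HF3).
  assert (Fb : b0 + 2 < F) by (unfold F; lia).
  assert (Hd0 : nb c2 b0 <> b0) by (destruct Hn0; congruence).
  assert (HdF : nb c2 F <> F) by (destruct HnF; congruence).
  assert (HdF0 : nb c2 F <> b0) by (pose proof (nb_ge c2 F); unfold F in *; lia).
  assert (HF3' : F + 3 <> b0) by lia.
  clearbody F.
  destruct (classic (E c1 ap aq)) as [He | Hne].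
  -
    destruct (Nat.eq_dec ap a0) as [Hp|Hp]; [|destruct (Nat.eq_dec aq a0) as [Hq|Hq]].
    + assert (aq <> a0) by (subst; intro; subst; apply (E_irr c1 a0); auto).
      exists (fun n => if n =? a0 then b0 else if n =? ap then b0 else if n =? aq then nb c2 b0 else (F + 10) + n).
      split; [sc|].
      rewrite Nat.eqb_refl. split; [reflexivity|].
      subst ap. rewrite Nat.eqb_refl. destruct (Nat.eqb_spec aq a0); [congruence|].
      destruct (Nat.eqb_spec aq a0); [congruence|]. rewrite Nat.eqb_refl. tauto.
    + exists (fun n => if n =? a0 then b0 else if n =? ap then nb c2 b0 else if n =? aq then b0 else (F + 10) + n).
      split; [sc|].
      rewrite Nat.eqb_refl. split; [reflexivity|].
      subst aq. rewrite Nat.eqb_refl. destruct (Nat.eqb_spec ap a0); [congruence|].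
      rewrite Nat.eqb_refl. split; intros _; [apply E_sym; exact Hn0 | exact He].
    + assert (aq <> ap) by (intro; subst; apply (E_irr c1 ap); auto).
      exists (fun n => if n =? a0 then b0 else if n =? ap then F else if n =? aq then nb c2 F else (F + 10) + n).
      split; [sc|].
      rewrite Nat.eqb_refl. split; [reflexivity|].
      destruct (Nat.eqb_spec ap a0); [congruence|]. rewrite Nat.eqb_refl.
      destruct (Nat.eqb_spec aq a0); [congruence|]. destruct (Nat.eqb_spec aq ap); [congruence|].
      rewrite Nat.eqb_refl. tauto.
  -
    destruct (Nat.eq_dec ap a0) as [Hp|Hp]; [|destruct (Nat.eq_dec aq a0) as [Hq|Hq]].
    + exists (fun n => if n =? a0 then b0 else if n =? ap then b0 else if n =? aq then F else (F + 10) + n).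
      split; [sc|].
      rewrite Nat.eqb_refl. split; [reflexivity|].
      subst ap. rewrite Nat.eqb_refl. destruct (Nat.eqb_spec aq a0).
      * subst; split; intro; exfalso; [apply Hne|apply (E_irr c2 b0)]; auto.
      * destruct (Nat.eqb_spec aq a0); [congruence|]. rewrite Nat.eqb_refl. tauto.
    + exists (fun n => if n =? a0 then b0 else if n =? ap then F else if n =? aq then b0 else (F + 10) + n).
      split; [sc|].
      rewrite Nat.eqb_refl. split; [reflexivity|].
      subst aq. rewrite Nat.eqb_refl. destruct (Nat.eqb_spec ap a0); [congruence|].
      rewrite Nat.eqb_refl. split; [tauto|intro Hx; exfalso; apply HF1; apply E_sym; auto].
    + destruct (Nat.eq_dec aq ap) as [Hpq|Hpq].
      * exists (fun n => if n =? a0 then b0 else if n =? ap then F else if n =? aq then F else (F + 10) + n).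
        split; [sc|].
        rewrite Nat.eqb_refl. split; [reflexivity|].
        subst aq. destruct (Nat.eqb_spec ap a0); [congruence|]. rewrite Nat.eqb_refl.
        split; intro; exfalso; [apply Hne|apply (E_irr c2 F)]; auto.
      * exists (fun n => if n =? a0 then b0 else if n =? ap then F else if n =? aq then F + 3 else (F + 10) + n).
        split; [sc|].
        rewrite Nat.eqb_refl. split; [reflexivity|].
        destruct (Nat.eqb_spec ap a0); [congruence|]. rewrite Nat.eqb_refl.
        destruct (Nat.eqb_spec aq a0); [congruence|]. destruct (Nat.eqb_spec aq ap); [congruence|].
        rewrite Nat.eqb_refl. tauto.
Qed.

Lemma exs_sat {t} (M : structure t) xs phi : forall s,
  sat M s (exs xs phi) <-> exists s2, (forall y, ~ In y xs -> s2 y = s y) /\ sat M s2 phi.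
Proof.
  induction xs as [|x xs IH]; intros s; simpl.
  - split; [intros H; exists s; auto | intros (s2 & H1 & H2)].
    replace s with s2; auto. apply functional_extensionality; intros y; apply H1; auto.
  - split.
    + intros (d & Hd). apply IH in Hd as (s2 & H1 & H2). exists s2; split; auto.
      intros y Hy. rewrite H1 by tauto. unfold upd. destruct (Nat.eqb_spec y x); [subst; tauto|auto].
    + intros (s2 & H1 & H2). exists (s2 x). apply IH. exists s2; split; auto.
      intros y Hy. unfold upd. destruct (Nat.eqb_spec y x); [subst; auto|]. apply H1. simpl; intros [Hx|Hx]; [congruence|tauto].
Qed.

Lemma bc_transfer {t} (M1 M2 : structure t) s1 s2 S phi :
  boolcomb S phi -> (forall f, In f S -> (sat M1 s1 f <-> sat M2 s2 f)) ->
  (sat M1 s1 phi <-> sat M2 s2 phi).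
Proof.
  intros H HS; induction H; simpl; auto; tauto.
Qed.

Definition patt (L : list var) (s s' : var -> nat) :=
  forall x y, In x L -> In y L -> (s x = s y <-> s' x = s' y).

Lemma pair_cases (u v p q : var) :
  (forall w, In w [u; v] <-> In w [p; q]) -> u = v \/ (u = p /\ v = q) \/ (u = q /\ v = p).
Proof.
  intros H. destruct (H u) as [Hu _]. destruct (H v) as [Hv _].
  destruct (H p) as [_ Hp]. destruct (H q) as [_ Hq].
  specialize (Hu ltac:(simpl; auto)). specialize (Hv ltac:(simpl; auto)).
  specialize (Hp ltac:(simpl; auto)). specialize (Hq ltac:(simpl; auto)).
  simpl in *. intuition congruence.
Qed.

Lemma block_dir c1 c2 (X : ext c1 c2) (Bl Q : list var) (U F : list (form voc2)) (V : list var)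
  (phi : form voc2) (s s' : var -> nat) (a0 b0 : nat) :
  (forall u, In u U -> forall t t', patt (fv u) t t' -> (sat (MS c1) t u <-> sat (MS c2) t' u)) ->
  (forall u, In u U -> incl (fv u) Bl) -> incl V Bl ->
  (forall a, In a F -> uniform_atom V a) -> boolcomb (U ++ F) phi ->
  (forall y, In y Bl -> ~ In y Q -> s y = a0 /\ s' y = b0) ->
  sat (MS c1) s (exs Q phi) -> sat (MS c2) s' (exs Q phi).
Proof.
  intros IH HfvU HV HF Hbc Hanc Hs.
  apply exs_sat in Hs as (s2 & Hag & Hs2).
  assert (Cl : exists p q, forall a, In a F -> exists R u v, a = FAtom R [u; v] /\
             In u V /\ In v V /\ (u = v \/ (u = p /\ v = q) \/ (u = q /\ v = p))).
  { destruct F as [|a0' F0].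
    - exists 0, 0. intros a [].
    - destruct (HF a0' (or_introl eq_refl)) as (R0 & zs0 & -> & Hl0 & Hz0).
      destruct zs0 as [|p [|q [|]]]; simpl in Hl0; try discriminate.
      exists p, q. intros a Ha. destruct (HF a Ha) as (R & zs & -> & Hl & Hz).
      destruct zs as [|u [|v [|]]]; simpl in Hl; try discriminate.
      exists R, u, v. split; [reflexivity|]. split; [apply Hz; simpl; auto|].
      split; [apply Hz; simpl; auto|]. apply pair_cases. intros w. rewrite Hz, Hz0. tauto. }
  destruct Cl as (p & q & Cl).
  destruct (X a0 b0 (s2 p) (s2 q)) as (g & ginj & g0 & gE).
  set (s2' := fun y => if in_dec Nat.eq_dec y Q then g (s2 y) else s' y).
  assert (Key : forall y, In y Bl -> s2' y = g (s2 y)).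
  { intros y Hy. unfold s2'. destruct (in_dec Nat.eq_dec y Q) as [|Hn]; auto.
    destruct (Hanc y Hy Hn) as [E1 E2]. rewrite Hag, E1, E2 by auto. auto. }
  apply exs_sat. exists s2'. split.
  { intros y Hy. unfold s2'. destruct (in_dec Nat.eq_dec y Q); tauto. }
  refine (proj1 (bc_transfer (MS c1) (MS c2) s2 s2' (U ++ F) phi Hbc _) Hs2).
  intros f Hf. apply in_app_or in Hf as [Hf|Hf].
  - apply IH; auto. intros x y Hx Hy.
    rewrite (Key x), (Key y) by (apply (HfvU f Hf); auto).
    split; [congruence|apply ginj].
  - destruct (Cl f Hf) as (R & u & v & -> & Hu & Hv & Hc). simpl.
    rewrite (Key u), (Key v) by auto.
    destruct Hc as [->|[[-> ->]|[-> ->]]].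
    + split; intro Hx; exfalso; eapply E_irr; eauto.
    + exact gE.
    + split; intro Hx; apply E_sym, gE, E_sym; auto.
Qed.

Lemma patt_incl L1 L2 s s' : incl L1 L2 -> patt L2 s s' -> patt L1 s s'.
Proof. intros H P x y Hx Hy; apply P; auto. Qed.

Lemma patt_sym L s s' : patt L s s' -> patt L s' s.
Proof. intros P x y Hx Hy; symmetry; apply P; auto. Qed.

Lemma inv c1 c2 (G1 : goodc c1) (G2 : goodc c2) : forall f, UF1 voc2 f ->
  forall s s' : var -> nat, patt (fv f) s s' -> (sat (MS c1) s f <-> sat (MS c2) s' f).
Proof.
  assert (X12 := ext_ok c1 c2 G1 G2). assert (X21 := ext_ok c2 c1 G2 G1).
  fix IH 2. intros f h. destruct h as [f Hun| | |x y|f h|f g hf hg|x0 xs U F V phi Hnd hU hfv hV hF hbc|x0 xs U F V phi Hnd hU hfv hV hF hbc];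
    intros s s' P.
  - destruct Hun as (R & zs & z & -> & Hl & Hz).
    destruct zs as [|u [|v [|]]]; simpl in Hl; try discriminate.
    assert (u = z) by (apply Hz; simpl; auto). assert (v = z) by (apply Hz; simpl; auto). subst.
    simpl. split; intro Hx; exfalso; eapply E_irr; eauto.
  - simpl; tauto.
  - simpl; tauto.
  - simpl. apply P; simpl; auto.
  - simpl. rewrite (IH f h s s' P). tauto.
  - simpl in *. rewrite (IH f hf s s'), (IH g hg s s'); [tauto| |];
      eapply patt_incl; eauto; intros z Hz; apply in_or_app; auto.
  - assert (IHU := fun u (Hu : In u U) => IH u (hU u Hu)).
    split.
    + apply (block_dir c1 c2 X12 (x0 :: xs) xs U F V phi s s' (s x0) (s' x0)); auto.
      intros y Hy Hn. destruct Hy as [<-|Hy]; tauto.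
    + apply (block_dir c2 c1 X21 (x0 :: xs) xs U F V phi s' s (s' x0) (s x0)); auto.
      * intros u Hu t t' Pt. symmetry. apply IHU; auto. apply patt_sym; auto.
      * intros y Hy Hn. destruct Hy as [<-|Hy]; tauto.
  - assert (IHU := fun u (Hu : In u U) => IH u (hU u Hu)).
    change (FEx x0 (exs xs phi)) with (exs (x0 :: xs) phi).
    split.
    + apply (block_dir c1 c2 X12 (x0 :: xs) (x0 :: xs) U F V phi s s' 0 0); auto.
      intros y Hy Hn. tauto.
    + apply (block_dir c2 c1 X21 (x0 :: xs) (x0 :: xs) U F V phi s' s 0 0); auto.
      * intros u Hu t t' Pt. symmetry. apply IHU; auto. apply patt_sym; auto.
      * intros y Hy Hn. tauto.
Qed.

Definition phi2 : form voc2 := FNeg (FEx 0 (FNeg (FExGe 2 1 (FAtom (tt : sym voc2) [0;1])))).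

Lemma phi2_FOC2 : @FOC2 voc2 phi2.
Proof.
  split; [simpl; reflexivity|]. split; [simpl; split; [lia|]; auto|].
  exists 0, 1. intros z Hz; simpl in Hz; intuition.
Qed.

Lemma phi2_B s : sat (MS 3) s phi2.
Proof.
  simpl. intros (x & Hx). apply Hx.
  assert (Hr := Nat.mod_upper_bound x 3 ltac:(lia)).
  destruct (x mod 3) as [|[|[|k]]] eqn:Hm; [| | |lia].
  - exists [x+1; x+2]. split; [repeat constructor; simpl; intuition lia|]. split; [reflexivity|].
    intros d [<-|[<-|[]]]; unfold E, upd; cbn -[Nat.div]; split; dm.
  - assert (1 <= x) by dm. exists [x-1; x+1]. split; [repeat constructor; simpl; intuition lia|]. split; [reflexivity|].
    intros d [<-|[<-|[]]]; unfold E, upd; cbn -[Nat.div]; split; dm.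
  - assert (2 <= x) by dm. exists [x-2; x-1]. split; [repeat constructor; simpl; intuition lia|]. split; [reflexivity|].
    intros d [<-|[<-|[]]]; unfold E, upd; cbn -[Nat.div]; split; dm.
Qed.

Lemma phi2_A s : ~ sat (MS 2) s phi2.
Proof.
  simpl. intros H. apply H. exists 0. intros (l & Hnd & Hl & Hall).
  destruct l as [|a [|b [|]]]; simpl in Hl; try discriminate.
  assert (Ha := Hall a ltac:(simpl; auto)). assert (Hb := Hall b ltac:(simpl; auto)).
  assert (a <> b) by (intro; subst; inversion Hnd; simpl in *; tauto).
  unfold E, upd in Ha, Hb. cbn -[Nat.div] in Ha, Hb. destruct Ha, Hb. dm.
Qed.

Lemma part2 : ~ frag_le FOC2 UF1_frag.
Proof.
  intro H. destruct (H voc2 phi2 phi2_FOC2 eq_refl) as (g & Hg & Hs & Heq).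
  pose (s := fun _ : var => 0).
  apply (phi2_A s). apply (Heq (MS 2) s).
  apply (inv 3 2 (or_intror eq_refl) (or_introl eq_refl) g Hg s s).
  - intros x y Hx. unfold sentence in Hs. rewrite Hs in Hx. destruct Hx.
  - apply (Heq (MS 3) s). apply phi2_B.
Qed.

Theorem mainTheorem4 : ~ frag_le UF1_frag FOC2 /\ ~ frag_le FOC2 UF1_frag.
Proof. split; [exact part1 | exact part2]. Qed.
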